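(* Let $G$ be a group which is the semidirect product of a normal subgroup $A$ and a subgroup $B$ (so $G=\langle A,B\rangle$, $A\trianglelefteq G$, $A\cap B=1$), with action $\theta:B\to \mathrm{Aut}(A)$, $\theta(b)(a)=a^b=b^{-1}ab$. Let $1\to R_1\to F_1\xrightarrow{\nu_1} A\to 1$ and $1\to R_2\to F_2\xrightarrow{\nu_2} B\to 1$ be free presentations of $A$ and $B$ (so $F_1,F_2$ are free groups, $\nu_1,\nu_2$ are epimorphisms with kernels $R_1,R_2$). Let $F=F_1*F_2$ be the free product, let $$S=\big\langle f_1^{-1}\overline{f_1}\,[f_2,f_1]\ \big|\ f_1,\overline{f_1}\in F_1,\ f_2\in F_2,\ \nu_1(\overline{f_1})=\theta(\nu_2 f_2)(\nu_1 f_1)\big\rangle^F,$$ and let $R=R_1^F R_2^F S$ (so that $1\to R\to F\to G\to 1$ is a free presentation of $G$). For $c\ge 1$ let $$\textstyle\prod[R_2,F_1,F_2]_c=\big\langle [r_2,f_1,\ldots,f_c]\ \big|\ r_2\in R_2,\ f_i\in F_1\cup F_2\ (1\le i\le c),\ f_k\in F_1 \text{ for some } k\big\rangle^F,$$ so that in particular $\prod[R_2,F_1,F_2]_1=[R_2,F_1]$. Then: (i) $R_1$ and $[R_2,F_1]$ are subgroups of $S$; (ii) $R=R_2S$; (iii) $R\cap\gamma_{c+1}(F)=(R_2\cap\gamma_{c+1}(F_2))(S\cap\gamma_{c+1}(F))$ for all $c\ge 1$; (iv) $[R,{}_cF]=[R_2,{}_cF_2]\,\prod[R_2,F_1,F_2]_c\,[S,{}_cF]$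 for all $c\ge 1$.
   Context: Commutators are $[x,y]=x^{-1}y^{-1}xy$ and are left-normed: $[x_1,\ldots,x_{n+1}]=[[x_1,\ldots,x_n],x_{n+1}]$. For a subset $X$ of $F$, $X^F$ or $\langle X\rangle^F$ denotes the normal closure of (the subgroup generated by) $X$ in $F$. $\gamma_{c+1}(F)$ is the $(c+1)$-st term of the lower central series of $F$, and $[R,{}_cF]=[R,F,\ldots,F]$ with $c$ copies of $F$. *)

(* Defs.v *)
From Stdlib Require Import List.
Import ListNotations.

Record group := Group {
  carrier :> Type;
  gmul : carrier -> carrier -> carrier;
  ginv : carrier -> carrier;
  gone : carrier;
  gmulA : forall x y z, gmul x (gmul y z) = gmul (gmul x y) z;
  gmul1 : forall x, gmul gone x = x;
  gmulV : forall x, gmul (ginv x) x = gone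
}.

Arguments gmul {g}.
Arguments ginv {g}.
Arguments gone {g}.

Section GroupDefs.
Variable F : group.

Definition subset := F -> Prop.

Definition comm (x y : F) : F := gmul (gmul (ginv x) (ginv y)) (gmul x y).

(* left-normed iterated commutator [x, y1, ..., yn] *)
Definition comm_list (x : F) (l : list F) : F := fold_left comm l x.

Definition conj (x g : F) : F := gmul (ginv g) (gmul x g).

Definition incl (X Y : subset) : Prop := forall x, X x -> Y x.
Definition seteq (X Y : subset) : Prop := forall x, X x <-> Y x.
Definition setI (X Y : subset) : subset := fun x => X x /\ Y x.
Definition setU (X Y : subset) : subset := fun x => X x \/ Y x.
Definition setT : subset := fun _ => True.

Definition is_subgroup (H : subset) : Prop :=
  H gone /\ (forall x y, H x -> H y -> H (gmul x y)) /\ (forall x, H x -> H (ginv x)).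

Definition is_normal (H : subset) : Prop :=
  is_subgroup H /\ forall x g, H x -> H (conj x g).

Definition gen (X : subset) : subset :=
  fun x => forall H, is_subgroup H -> incl X H -> H x.

Definition ncl (X : subset) : subset :=
  gen (fun x => exists y g, X y /\ x = conj y g).

Definition setM (H K : subset) : subset :=
  fun x => exists h k, H h /\ K k /\ x = gmul h k.

Definition commg (H K : subset) : subset :=
  gen (fun x => exists h k, H h /\ K k /\ x = comm h k).

Fixpoint commg_iter (H K : subset) (c : nat) : subset :=
  match c with
  | O => H
  | S c' => commg (commg_iter H K c') K
  end.

(* gamma_{c+1}(H) = [H, _c H] *)
Definition lcs (H : subset) (c : nat) : subset := commg_iter H H c.

End GroupDefs.

Arguments incl {F}. Arguments seteq {F}. Arguments setI {F}. Arguments setU {F}.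
Arguments setT {F}. Arguments is_subgroup {F}. Arguments is_normal {F}.
Arguments gen {F}. Arguments ncl {F}. Arguments setM {F}. Arguments commg {F}.
Arguments commg_iter {F}. Arguments lcs {F}. Arguments comm {F}.
Arguments comm_list {F}. Arguments conj {F}.

Definition is_hom {F H : group} (phi : F -> H) : Prop :=
  forall x y, phi (gmul x y) = gmul (phi x) (phi y).

Definition is_hom_on {F H : group} (P : F -> Prop) (phi : F -> H) : Prop :=
  forall x y, P x -> P y -> phi (gmul x y) = gmul (phi x) (phi y).

Definition is_free_on (F : group) (X : F -> Prop) : Prop :=
  forall (H : group) (f : F -> H),
    exists phi : F -> H,
      is_hom phi /\ (forall x, X x -> phi x = f x) /\
      (forall psi : F -> H, is_hom psi -> (forall x, X x -> psi x = f x) ->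
         forall x, psi x = phi x).

Definition prodR2F1F2 {F : group} (R2 F1 F2 : F -> Prop) (c : nat) : F -> Prop :=
  ncl (fun x => exists r2 (l : list F),
         R2 r2 /\ length l = c /\ Forall (fun f => F1 f \/ F2 f) l /\
         Exists F1 l /\ x = comm_list r2 l).

(* Main.v *)
From Stdlib Require Import List Classical ClassicalEpsilon.
Import ListNotations.
Require Import Defs.

Lemma mulgV {F : group} (x : F) : gmul x (ginv x) = gone.
Proof.
  transitivity (gmul (gmul (ginv (ginv x)) (ginv x)) (gmul x (ginv x))).
  { rewrite gmulV, gmul1. reflexivity. }
  rewrite <- gmulA, (gmulA _ (ginv x) x), gmulV, gmul1, gmulV. reflexivity.
Qed.
Lemma mulg1 {F : group} (x : F) : gmul x gone = x.
Proof. rewrite <- (gmulV _ x), gmulA, mulgV, gmul1. reflexivity. Qed.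
Lemma massoc {F : group} (x y z : F) : gmul (gmul x y) z = gmul x (gmul y z).
Proof. symmetry; apply gmulA. Qed.
Lemma canc1 {F : group} (x y : F) : gmul (ginv x) (gmul x y) = y.
Proof. rewrite gmulA, gmulV, gmul1; reflexivity. Qed.
Lemma canc2 {F : group} (x y : F) : gmul x (gmul (ginv x) y) = y.
Proof. rewrite gmulA, mulgV, gmul1; reflexivity. Qed.
Lemma inv_uniq {F : group} (x y : F) : gmul x y = gone -> ginv x = y.
Proof. intro H. rewrite <- (mulg1 (ginv x)), <- H, canc1. reflexivity. Qed.
Lemma invM {F : group} (x y : F) : ginv (gmul x y) = gmul (ginv y) (ginv x).
Proof. apply inv_uniq. rewrite massoc, canc2, mulgV. reflexivity. Qed.
Lemma invinv {F : group} (x : F) : ginv (ginv x) = x.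
Proof. apply inv_uniq, gmulV. Qed.
Lemma inv1 {F : group} : ginv (gone : F) = gone.
Proof. apply inv_uniq, gmul1. Qed.

Global Hint Rewrite @massoc @gmul1 @mulg1 @gmulV @mulgV @canc1 @canc2 @invM @invinv @inv1 : grp.
Ltac gsimpl := unfold comm, conj; autorewrite with grp; try reflexivity.

Lemma test {F : group} (x y f : F) : comm (gmul x y) f = gmul (conj (comm x f) y) (comm y f).
Proof. gsimpl. Qed.

Lemma gen_sub {F : group} (X : subset F) : incl X (gen X).
Proof. intros x Hx H _ HXH. apply HXH, Hx. Qed.
Lemma gen_subgroup {F : group} (X : subset F) : is_subgroup (gen X).
Proof.
  split; [|split].
  - intros H [h1 _] _; exact h1.
  - intros x y Hx Hy H HH HXH. pose proof (Hx H HH HXH). pose proof (Hy H HH HXH).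
    destruct HH as [_ [hm _]]. apply hm; auto.
  - intros x Hx H HH HXH. pose proof (Hx H HH HXH). destruct HH as [_ [_ hi]]. apply hi; auto.
Qed.
Lemma gen_min {F : group} (X H : subset F) : is_subgroup H -> incl X H -> incl (gen X) H.
Proof. intros HH HXH x Hx. apply Hx; auto. Qed.
Lemma gen_mono {F : group} (X Y : subset F) : incl X Y -> incl (gen X) (gen Y).
Proof. intros HXY. apply gen_min. apply gen_subgroup. intros x Hx; apply gen_sub, HXY, Hx. Qed.

Lemma sg1 {F : group} (H : subset F) : is_subgroup H -> H gone.
Proof. intros [a _]; exact a. Qed.
Lemma sgM {F : group} (H : subset F) x y : is_subgroup H -> H x -> H y -> H (gmul x y).
Proof. intros [_ [a _]]; apply a. Qed.
Lemma sgV {F : group} (H : subset F) x : is_subgroup H -> H x -> H (ginv x).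
Proof. intros [_ [_ a]]; apply a. Qed.
Lemma sgVr {F : group} (H : subset F) x : is_subgroup H -> H (ginv x) -> H x.
Proof. intros HH Hx. rewrite <- (invinv x). apply sgV; auto. Qed.

Lemma conjM {F : group} (x y g : F) : conj (gmul x y) g = gmul (conj x g) (conj y g).
Proof. gsimpl. Qed.
Lemma conjV {F : group} (x g : F) : conj (ginv x) g = ginv (conj x g).
Proof. gsimpl. Qed.
Lemma conj1 {F : group} (g : F) : conj gone g = gone.
Proof. gsimpl. Qed.
Lemma conjg1 {F : group} (x : F) : conj x gone = x.
Proof. gsimpl. Qed.
Lemma conjconj {F : group} (x a b : F) : conj (conj x a) b = conj x (gmul a b).
Proof. gsimpl. Qed.
Lemma conjK {F : group} (x a : F) : conj (conj x a) (ginv a) = x.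
Proof. gsimpl. Qed.
Lemma conjKV {F : group} (x a : F) : conj (conj x (ginv a)) a = x.
Proof. gsimpl. Qed.
Lemma conj_comm {F : group} (x y g : F) : conj (comm x y) g = comm (conj x g) (conj y g).
Proof. gsimpl. Qed.

Lemma gen_conj {F : group} (X Q : subset F) :
  (forall y g, X y -> Q g -> X (conj y g)) ->
  forall x g, gen X x -> Q g -> gen X (conj x g).
Proof.
  intros HX x g Hx Hg.
  refine (gen_min X (fun x => gen X (conj x g)) _ _ x Hx).
  - split; [|split].
    + rewrite conj1. apply sg1, gen_subgroup.
    + intros a b Ha Hb. rewrite conjM. apply sgM; auto. apply gen_subgroup.
    + intros a Ha. rewrite conjV. apply sgV; auto. apply gen_subgroup.
  - intros y Hy. apply gen_sub, HX; auto.
Qed.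

Lemma ncl_normal {F : group} (X : subset F) : is_normal (ncl X).
Proof.
  split. apply gen_subgroup.
  intros x g Hx. unfold ncl. apply (gen_conj _ (fun _ => True)); auto.
  intros y h [z [a [Hz ->]]] _. exists z, (gmul a h). split; auto. apply conjconj.
Qed.
Lemma ncl_sub {F : group} (X : subset F) : incl X (ncl X).
Proof. intros x Hx. apply gen_sub. exists x, gone. split; auto. symmetry; apply conjg1. Qed.
Lemma ncl_min {F : group} (X N : subset F) : is_normal N -> incl X N -> incl (ncl X) N.
Proof.
  intros [HN HNc] HXN. apply gen_min; auto. intros x [y [g [Hy ->]]]. apply HNc, HXN, Hy.
Qed.
Lemma ncl_mono {F : group} (X Y : subset F) : incl X Y -> incl (ncl X) (ncl Y).
Proof. intros H. apply ncl_min. apply ncl_normal. intros x Hx; apply ncl_sub, H, Hx. Qed.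

Lemma setM_subgroup {F : group} (H N : subset F) :
  is_subgroup H -> is_normal N -> is_subgroup (setM H N).
Proof.
  intros HH [HN HNc]. split; [|split].
  - exists gone, gone. split; [apply sg1; auto|split; [apply sg1; auto|]]. gsimpl.
  - intros x y [h [n [Hh [Hn ->]]]] [h' [n' [Hh' [Hn' ->]]]].
    exists (gmul h h'), (gmul (conj n h') n'). split; [apply sgM; auto|split].
    + apply sgM; auto.
    + gsimpl.
  - intros x [h [n [Hh [Hn ->]]]]. exists (ginv h), (conj (ginv n) (ginv h)).
    split; [apply sgV; auto|split]. apply HNc, sgV; auto. gsimpl.
Qed.
Lemma setM_normal {F : group} (H N : subset F) :
  is_normal H -> is_normal N -> is_normal (setM H N).
Proof.
  intros HH HN. split. apply setM_subgroup; auto. apply HH.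
  intros x g [h [n [Hh [Hn ->]]]]. exists (conj h g), (conj n g). split; [apply HH; auto|split].
  apply HN; auto. apply conjM.
Qed.
Lemma setM_l {F : group} (H N : subset F) x : is_subgroup N -> H x -> setM H N x.
Proof. intros HN Hx. exists x, gone. split; auto. split. apply sg1; auto. gsimpl. Qed.
Lemma setM_r {F : group} (H N : subset F) x : is_subgroup H -> N x -> setM H N x.
Proof. intros HH Hx. exists gone, x. split. apply sg1; auto. split; auto. gsimpl. Qed.
Lemma setM_in {F : group} (H N K : subset F) :
  is_subgroup K -> incl H K -> incl N K -> incl (setM H N) K.
Proof. intros HK a b x [h [n [Hh [Hn ->]]]]. apply sgM; auto. Qed.

From Stdlib Require Import ProofIrrelevance.

Section Dummy. End Dummy.

Definition subg_mul {F : group} (P : subset F) (HP : is_subgroup P)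
  (a b : {x | P x}) : {x | P x} :=
  exist _ (gmul (proj1_sig a) (proj1_sig b)) (sgM P _ _ HP (proj2_sig a) (proj2_sig b)).
Definition subg_inv {F : group} (P : subset F) (HP : is_subgroup P)
  (a : {x | P x}) : {x | P x} :=
  exist _ (ginv (proj1_sig a)) (sgV P _ HP (proj2_sig a)).
Definition subg_one {F : group} (P : subset F) (HP : is_subgroup P) : {x | P x} :=
  exist _ gone (sg1 P HP).

Lemma sig_eq {F : group} (P : subset F) (a b : {x | P x}) : proj1_sig a = proj1_sig b -> a = b.
Proof. destruct a, b; simpl; intros ->. f_equal. apply proof_irrelevance. Qed.

Definition subg {F : group} (P : subset F) (HP : is_subgroup P) : group.
Proof.
  refine (Group {x | P x} (subg_mul P HP) (subg_inv P HP) (subg_one P HP) _ _ _).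
  - intros; apply sig_eq; simpl; apply gmulA.
  - intros; apply sig_eq; simpl; apply gmul1.
  - intros; apply sig_eq; simpl; apply gmulV.
Defined.

Lemma hom1 {F H : group} (phi : F -> H) : is_hom phi -> phi gone = gone.
Proof.
  intros Hp. assert (E : gmul (phi gone) (phi gone) = gmul gone (phi gone)).
  { rewrite <- Hp, gmul1, gmul1. reflexivity. }
  rewrite <- (canc1 (phi gone) (phi gone)), E. gsimpl.
Qed.
Lemma homV {F H : group} (phi : F -> H) x : is_hom phi -> phi (ginv x) = ginv (phi x).
Proof.
  intros Hp. symmetry. apply inv_uniq. rewrite <- Hp, mulgV. apply hom1; auto.
Qed.
Lemma hom_comm {F H : group} (phi : F -> H) x y : is_hom phi -> phi (comm x y) = comm (phi x) (phi y).
Proof. intros Hp. unfold comm. rewrite !Hp, !homV by auto. reflexivity. Qed.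
Lemma hom_conj {F H : group} (phi : F -> H) x y : is_hom phi -> phi (conj x y) = conj (phi x) (phi y).
Proof. intros Hp. unfold conj. rewrite !Hp, !homV by auto. reflexivity. Qed.

Lemma homon1 {F H : group} (P : subset F) (phi : F -> H) : is_subgroup P -> is_hom_on P phi -> phi gone = gone.
Proof.
  intros HP Hp. assert (E : gmul (phi gone) (phi gone) = gmul gone (phi gone)).
  { rewrite <- Hp, gmul1, gmul1. reflexivity. apply sg1; auto. apply sg1; auto. }
  rewrite <- (canc1 (phi gone) (phi gone)), E. gsimpl.
Qed.
Lemma homonV {F H : group} (P : subset F) (phi : F -> H) x : is_subgroup P -> is_hom_on P phi -> P x ->
  phi (ginv x) = ginv (phi x).
Proof.
  intros HP Hp Hx. symmetry. apply inv_uniq. rewrite <- Hp, mulgV. apply (homon1 P); auto.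
  auto. apply sgV; auto.
Qed.

Lemma free_gen (F : group) (X : subset F) : is_free_on F X -> forall x, gen X x.
Proof.
  intros Hf.
  pose (HP := gen_subgroup X).
  pose (f := fun x : F => match excluded_middle_informative (gen X x) with
                          | left p => (exist _ x p : subg (gen X) HP)
                          | right _ => (gone : subg (gen X) HP) end).
  destruct (Hf (subg (gen X) HP) f) as [phi [Hphi [HphiX _]]].
  destruct (Hf F (fun x => x)) as [phi0 [_ [_ Hu]]].
  pose (psi := fun x => proj1_sig (phi x)).
  assert (E1 : forall x, psi x = phi0 x).
  { apply Hu.
    - intros x y. unfold psi. rewrite Hphi. reflexivity.
    - intros x Hx. unfold psi. rewrite HphiX by auto. unfold f.
      destruct (excluded_middle_informative (gen X x)) as [p|n]. reflexivity.
      exfalso. apply n, gen_sub, Hx. }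
  assert (E2 : forall x, x = phi0 x).
  { apply Hu. intros x y; reflexivity. intros; reflexivity. }
  intros x. rewrite (E2 x), <- E1. unfold psi. apply (proj2_sig (phi x)).
Qed.

Lemma normal_by_gens {F : group} (H Z : subset F) :
  is_subgroup H -> (forall x, gen Z x) -> (forall g, Z g -> Z (ginv g)) ->
  (forall g x, Z g -> H x -> H (conj x g)) -> is_normal H.
Proof.
  intros HH HZ HZV Hc. split; auto.
  set (D := fun g => forall x, H x <-> H (conj x g)).
  assert (HD : is_subgroup D).
  { split; [|split].
    - intros x. rewrite conjg1. tauto.
    - intros g h Hg Hh x. rewrite <- conjconj. rewrite (Hg x). apply Hh.
    - intros g Hg x. rewrite (Hg (conj x (ginv g))). rewrite conjKV. tauto. }
  assert (ZD : incl Z D).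
  { intros g Hg x. split. apply Hc; auto. intros Hx. rewrite <- (conjK x g). apply Hc; auto. }
  intros x g Hx. apply (proj1 (gen_min Z D HD ZD g (HZ g) x)), Hx.
Qed.

Lemma commM_l {F : group} (x y f : F) : comm (gmul x y) f = gmul (conj (comm x f) y) (comm y f).
Proof. gsimpl. Qed.
Lemma commV_l {F : group} (x f : F) : comm (ginv x) f = ginv (conj (comm x f) (ginv x)).
Proof. gsimpl. Qed.
Lemma comm1_l {F : group} (f : F) : comm gone f = gone.
Proof. gsimpl. Qed.
Lemma commM_r {F : group} (y g h : F) : comm y (gmul g h) = gmul (comm y h) (conj (comm y g) h).
Proof. gsimpl. Qed.
Lemma commV_r {F : group} (y g : F) : comm y (ginv g) = ginv (conj (comm y g) (ginv g)).
Proof. gsimpl. Qed.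
Lemma comm1_r {F : group} (y : F) : comm y gone = gone.
Proof. gsimpl. Qed.
Lemma comm_conj_l {F : group} (y a f : F) : comm (conj y a) f = conj (comm y (conj f (ginv a))) a.
Proof. gsimpl. Qed.

Lemma commW_subgroup {F : group} (P Q M : subset F) :
  is_subgroup P -> is_subgroup M -> (forall m p, M m -> P p -> M (conj m p)) ->
  is_subgroup (fun x => P x /\ forall f, Q f -> M (comm x f)).
Proof.
  intros HP HM Hc. split; [|split].
  - split. apply sg1; auto. intros f _. rewrite comm1_l. apply sg1; auto.
  - intros x y [Px Hx] [Py Hy]. split. apply sgM; auto.
    intros f Hf. rewrite commM_l. apply sgM; auto.
  - intros x [Px Hx]. split. apply sgV; auto.
    intros f Hf. rewrite commV_l. apply sgV; auto. apply Hc; auto. apply sgV; auto.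
Qed.

Lemma lemmaG {F : group} (Y Z : subset F) : (forall x, gen Z x) ->
  forall x f, ncl Y x -> ncl (fun w => exists y z, Y y /\ Z z /\ w = comm y z) (comm x f).
Proof.
  intros HZ.
  set (M := ncl (fun w => exists y z, Y y /\ Z z /\ w = comm y z)).
  assert (HM : is_normal M) by apply ncl_normal.
  assert (St1 : forall y h, Y y -> M (comm y h)).
  { intros y h Hy.
    assert (Hs : is_subgroup (fun h => M (comm y h))).
    { split; [|split].
      - rewrite comm1_r. apply sg1, HM.
      - intros g k Hg Hk. rewrite commM_r. apply sgM; auto. apply HM. apply HM; auto.
      - intros g Hg. rewrite commV_r. apply sgV. apply HM. apply HM; auto. }
    apply (gen_min Z _ Hs); [|apply HZ].
    intros z Hz. apply ncl_sub. exists y, z. auto. }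
  assert (HW := commW_subgroup (fun _ => True) (fun _ => True) M ltac:(repeat split; auto)
                  (proj1 HM) (fun m p Hm _ => proj2 HM m p Hm)).
  intros x f Hx.
  assert (W : (fun x => True /\ forall f, True -> M (comm x f)) x).
  { apply (gen_min (fun x => exists y g, Y y /\ x = conj y g) _ HW); [|apply Hx].
    intros w [y [a [Hy ->]]]. split; auto. intros g _. rewrite comm_conj_l.
    apply HM, St1, Hy. }
  apply W; auto.
Qed.

Lemma comm_list_app1 {F : group} (y z : F) l : comm_list y (l ++ [z]) = comm (comm_list y l) z.
Proof. unfold comm_list. rewrite fold_left_app. reflexivity. Qed.
Lemma comm_list_cons {F : group} (y z : F) l : comm_list y (z :: l) = comm_list (comm y z) l.
Proof. reflexivity. Qed.
Lemma comm_list_conj {F : group} (y a : F) l :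
  conj (comm_list y l) a = comm_list (conj y a) (map (fun f => conj f a) l).
Proof.
  revert y. induction l as [|z l IH]; intros y; cbn [map]. reflexivity.
  rewrite !comm_list_cons, IH, conj_comm. reflexivity.
Qed.

Lemma commg_iter_subgroup {F : group} (H K : subset F) c :
  is_subgroup H -> is_subgroup (commg_iter H K c).
Proof. intros HH. destruct c; simpl; auto. apply gen_subgroup. Qed.

Lemma commg_iter_in {F : group} (H K P : subset F) c :
  is_subgroup P -> incl H P -> incl K P -> incl (commg_iter H K c) P.
Proof.
  intros HP HHP HKP. induction c; simpl; auto.
  apply gen_min; auto. intros x [h [k [Hh [Hk ->]]]]. unfold comm.
  repeat apply sgM; auto; apply sgV; auto.
Qed.

Lemma commg_iter_mono {F : group} (H K H' K' : subset F) c :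
  incl H H' -> incl K K' -> incl (commg_iter H K c) (commg_iter H' K' c).
Proof.
  intros a b. induction c; simpl; auto. apply gen_mono.
  intros x [h [k [Hh [Hk ->]]]]. exists h, k; auto.
Qed.

Lemma commg_iter_conj {F : group} (H K Q : subset F) c :
  (forall y g, H y -> Q g -> H (conj y g)) -> (forall y g, K y -> Q g -> K (conj y g)) ->
  forall x g, commg_iter H K c x -> Q g -> commg_iter H K c (conj x g).
Proof.
  intros HH HK. induction c; simpl; auto.
  apply gen_conj. intros y g [h [k [Hh [Hk ->]]]] Hg. exists (conj h g), (conj k g).
  repeat split; auto. apply conj_comm.
Qed.

Lemma comm_list_in {F : group} (H K : subset F) y l :
  H y -> Forall K l -> commg_iter H K (length l) (comm_list y l).
Proof.
  intros Hy. induction l as [|z l IH] using rev_ind; intros Hl; simpl; auto.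
  apply Forall_app in Hl. destruct Hl as [Hl Hz]. inversion Hz; subst.
  rewrite comm_list_app1, length_app. simpl. rewrite PeanoNat.Nat.add_comm. simpl.
  apply gen_sub. exists (comm_list y l), z. auto.
Qed.

Lemma lemma_iter {F : group} (R Y0 Zg : subset F) :
  (forall x, gen Zg x) -> incl R (ncl Y0) -> forall c,
  incl (commg_iter R setT c)
       (ncl (fun x => exists y l, Y0 y /\ length l = c /\ Forall Zg l /\ x = comm_list y l)).
Proof.
  intros HZ HR c. induction c; simpl.
  - intros x Hx. apply (ncl_mono Y0). intros w Hw. exists w, []. simpl; auto. apply HR, Hx.
  - apply gen_min. apply ncl_normal.
    intros w [x [f [Hx [_ ->]]]]. apply IHc in Hx.
    refine (ncl_mono _ _ _ _ (lemmaG _ Zg HZ x f Hx)).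
    intros v [y [z [[y0 [l [Hy0 [Hl [HF ->]]]]] [Hz ->]]]].
    exists y0, (l ++ [z]). repeat split; auto.
    rewrite length_app, Hl; simpl. apply PeanoNat.Nat.add_comm.
    apply Forall_app; split; auto.
    symmetry; apply comm_list_app1.
Qed.

Lemma lemma_Y {F : group} (P2 R2 : subset F) :
  is_subgroup P2 -> incl R2 P2 -> (forall r p, R2 r -> P2 p -> R2 (conj r p)) -> forall c,
  incl (commg_iter R2 P2 c)
       (gen (fun x => exists r l, R2 r /\ Forall P2 l /\ length l = c /\ x = comm_list r l)).
Proof.
  intros HP2 HR2P HR2c c. induction c; simpl.
  - intros x Hx. apply gen_sub. exists x, []. simpl; auto.
  - set (Yc1 := fun x => exists r l, R2 r /\ Forall P2 l /\ length l = S c /\ x = comm_list r l).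
    assert (Hc : forall m p, gen Yc1 m -> P2 p -> gen Yc1 (conj m p)).
    { apply gen_conj. intros y p [r [l [Hr [Hl [Hlen ->]]]]] Hp.
      exists (conj r p), (map (fun f => conj f p) l). repeat split.
      - apply HR2c; auto.
      - apply Forall_map. eapply Forall_impl; [|exact Hl]. intros a Ha. unfold conj.
        repeat apply sgM; auto. apply sgV; auto.
      - rewrite length_map; auto.
      - apply comm_list_conj. }
    assert (HW := commW_subgroup P2 P2 (gen Yc1) HP2 (gen_subgroup _) Hc).
    apply gen_min. apply gen_subgroup.
    intros w [x [f [Hx [Hf ->]]]]. apply IHc in Hx.
    assert (Wx : P2 x /\ forall f, P2 f -> gen Yc1 (comm x f)).
    { refine (gen_min _ _ HW _ x Hx).
      intros y [r [l [Hr [Hl [Hlen ->]]]]]. split.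
      - apply (commg_iter_in R2 P2 P2 (length l)); auto. intros a Ha; auto. apply comm_list_in; auto.
      - intros g Hg. apply gen_sub. exists r, (l ++ [g]). repeat split; auto.
        apply Forall_app; split; auto.
        rewrite length_app, Hlen; simpl. apply PeanoNat.Nat.add_comm.
        symmetry; apply comm_list_app1. }
    apply Wx, Hf.
Qed.

Lemma normal_seteq {F : group} (H K : subset F) : seteq H K -> is_normal K -> is_normal H.
Proof.
  intros E [[h1 [hm hi]] hc]. split; [split; [|split]|]; intros; apply E.
  apply h1. apply hm; apply E; auto. apply hi; apply E; auto. apply hc; apply E; auto.
Qed.

Lemma hom_commg_iter {F : group} (psi : F -> F) (H K H' K' : subset F) c :
  is_hom psi -> (forall x, H x -> H' (psi x)) -> (forall x, K x -> K' (psi x)) -> is_subgroup H' ->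
  forall x, commg_iter H K c x -> commg_iter H' K' c (psi x).
Proof.
  intros Hp HH HK HH'. induction c; simpl; auto.
  apply gen_min.
  - split; [|split].
    + rewrite hom1 by auto. apply sg1, gen_subgroup.
    + intros a b Ha Hb. rewrite Hp. apply sgM; auto. apply gen_subgroup.
    + intros a Ha. rewrite homV by auto. apply sgV; auto. apply gen_subgroup.
  - intros w [h [k [Hh [Hk ->]]]]. rewrite hom_comm by auto. apply gen_sub.
    exists (psi h), (psi k). auto.
Qed.

Theorem theorem2p1
  (G : group) (A B : G -> Prop)
  (hA : is_normal A) (hB : is_subgroup B)
  (hGAB : seteq (gen (setU A B)) setT)
  (hAB : forall x, A x -> B x -> x = gone)
  (F : group) (X1 X2 : F -> Prop)
  (hX12 : forall x, X1 x -> X2 x -> False)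
  (hfree : is_free_on F (setU X1 X2))
  (nu1 nu2 : F -> G)
  (hnu1 : is_hom_on (gen X1) nu1)
  (hnu1A : forall a, A a <-> exists x, gen X1 x /\ nu1 x = a)
  (hnu2 : is_hom_on (gen X2) nu2)
  (hnu2B : forall b, B b <-> exists x, gen X2 x /\ nu2 x = b) :
  let F1 := gen X1 in
  let F2 := gen X2 in
  let R1 : F -> Prop := fun x => F1 x /\ nu1 x = gone in
  let R2 : F -> Prop := fun x => F2 x /\ nu2 x = gone in
  let S := ncl (fun x => exists f1 f1' f2, F1 f1 /\ F1 f1' /\ F2 f2 /\
                   nu1 f1' = conj (nu1 f1) (nu2 f2) /\
                   x = gmul (gmul (ginv f1) f1') (comm f2 f1)) in
  let R := setM (setM (ncl R1) (ncl R2)) S in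
  (incl R1 S /\ incl (commg R2 F1) S) /\
  seteq R (setM R2 S) /\
  (forall c, 1 <= c ->
     seteq (setI R (lcs setT c))
           (setM (setI R2 (lcs F2 c)) (setI S (lcs setT c)))) /\
  (forall c, 1 <= c ->
     seteq (commg_iter R setT c)
           (setM (setM (commg_iter R2 F2 c) (prodR2F1F2 R2 F1 F2 c))
                 (commg_iter S setT c))).
Proof.
  intros F1 F2 R1 R2 S R.
  assert (HF1 : is_subgroup F1) by apply gen_subgroup.
  assert (HF2 : is_subgroup F2) by apply gen_subgroup.
  assert (Hall : forall x, gen (setU X1 X2) x) by (apply free_gen; auto).
  assert (HallF : forall x, gen (setU F1 F2) x).
  { intros x. refine (gen_mono _ _ _ x (Hall x)). intros y [Hy|Hy]; [left|right]; apply gen_sub; auto. }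
  assert (HUV : forall g, setU F1 F2 g -> setU F1 F2 (ginv g)).
  { intros g [Hg|Hg]; [left|right]; apply sgV; auto. }
  assert (nu11 : nu1 gone = gone) by (apply (homon1 F1); auto).
  assert (nu21 : nu2 gone = gone) by (apply (homon1 F2); auto).
  assert (HR2 : is_subgroup R2).
  { split; [|split].
    - split; auto. apply sg1; auto.
    - intros x y [Hx Ex] [Hy Ey]. split. apply sgM; auto. rewrite hnu2, Ex, Ey by auto. apply gmul1.
    - intros x [Hx Ex]. split. apply sgV; auto. rewrite (homonV F2), Ex by auto. apply inv1. }
  assert (HR2F2 : incl R2 F2) by (intros x [Hx _]; auto).
  assert (nu2conj : forall x p, F2 x -> F2 p -> nu2 (conj x p) = conj (nu2 x) (nu2 p)).
  { intros x p Hx Hp. unfold conj. rewrite !hnu2, (homonV F2) by (auto; repeat apply sgM; auto; apply sgV; auto).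
    reflexivity. }
  assert (HR2c : forall r p, R2 r -> F2 p -> R2 (conj r p)).
  { intros r p [Hr Er] Hp. split. unfold conj; repeat apply sgM; auto; apply sgV; auto.
    rewrite nu2conj, Er by auto. apply conj1. }
  assert (HR2comm : forall r p, R2 r -> F2 p -> R2 (comm r p)).
  { intros r p Hr Hp. replace (comm r p) with (gmul (ginv r) (conj r p)) by gsimpl.
    apply sgM; auto. apply sgV; auto. }
  assert (HS : is_normal S) by apply ncl_normal.
  assert (Hi1 : incl R1 S).
  { intros r [Hr Er]. apply ncl_sub. exists gone, r, gone. repeat split; auto.
    apply sg1; auto. apply sg1; auto. rewrite Er, nu11, nu21, conj1; reflexivity. gsimpl. }
  assert (HcommS : forall r g, R2 r -> F1 g -> S (comm r g)).
  { intros r g [Hr Er] Hg. apply ncl_sub. exists g, g, r. repeat split; auto.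
    rewrite Er, conjg1. reflexivity. gsimpl. }
  assert (Hi2 : incl (commg R2 F1) S).
  { apply gen_min. apply HS. intros x [r [g [Hr [Hg ->]]]]. apply HcommS; auto. }
  assert (HR2S : is_normal (setM R2 S)).
  { apply (normal_by_gens _ (setU F1 F2)); auto. apply setM_subgroup; auto.
    intros g x [Hg|Hg] [r [s [Hr [Hs ->]]]].
    - exists r, (gmul (comm r g) (conj s g)). split; [auto|split].
      apply sgM. apply HS. apply HcommS; auto. apply HS; auto. gsimpl.
    - exists (conj r g), (conj s g). split; [auto|split]. apply HS; auto. apply conjM. }
  assert (Hii : seteq R (setM R2 S)).
  { intros x; split.
    - refine (setM_in _ _ _ (proj1 HR2S) (setM_in _ _ _ (proj1 HR2S) _ _) _ x).
      + apply ncl_min; auto. intros y Hy. apply setM_r; auto.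
      + apply ncl_min; auto. intros y Hy. apply setM_l; auto. apply HS.
      + intros y Hy. apply setM_r; auto.
    - intros [r [s [Hr [Hs ->]]]]. exists (gmul gone r), s. split; [|split; auto].
      exists gone, r. split; [apply sg1, ncl_normal | split; [apply ncl_sub; auto | reflexivity]]. gsimpl. }
  split; [split; auto|]. split; [exact Hii|].
  (* retraction onto F2 *)
  destruct (hfree F (fun x => if excluded_middle_informative (X1 x) then gone else x))
    as [psi [Hpsi [HpsiX _]]].
  assert (psi_F2 : forall x, F2 x -> psi x = x).
  { apply gen_min.
    - split; [|split]. apply hom1; auto.
      intros a b Ha Hb. rewrite Hpsi, Ha, Hb; reflexivity.
      intros a Ha. rewrite homV, Ha; auto.
    - intros x Hx. rewrite HpsiX by (right; auto).
      destruct (excluded_middle_informative (X1 x)); auto. exfalso; eauto. }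
  assert (psi_F1 : forall x, F1 x -> psi x = gone).
  { apply gen_min.
    - split; [|split]. apply hom1; auto.
      intros a b Ha Hb. rewrite Hpsi, Ha, Hb; gsimpl.
      intros a Ha. rewrite homV, Ha; auto; gsimpl.
    - intros x Hx. rewrite HpsiX by (left; auto).
      destruct (excluded_middle_informative (X1 x)); auto. contradiction. }
  assert (psi_img : forall x, F2 (psi x)).
  { intros x. refine (gen_min (setU X1 X2) (fun x => F2 (psi x)) _ _ x (Hall x)).
    - split; [|split]. rewrite hom1; auto. apply sg1; auto.
      intros a b Ha Hb. rewrite Hpsi. apply sgM; auto.
      intros a Ha. rewrite homV; auto. apply sgV; auto.
    - intros y [Hy|Hy]. rewrite psi_F1. apply sg1; auto. apply gen_sub; auto.
      rewrite psi_F2; apply gen_sub; auto. }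
  assert (psi_S : forall x, S x -> psi x = gone).
  { apply ncl_min.
    - split; [split; [|split]|].
      apply hom1; auto.
      intros a b Ha Hb. rewrite Hpsi, Ha, Hb; gsimpl.
      intros a Ha. rewrite homV, Ha; auto; gsimpl.
      intros a g Ha. rewrite hom_conj, Ha; auto. gsimpl.
    - intros x [f1 [f1' [f2 [H1 [H1' [H2 [_ ->]]]]]]].
      rewrite !Hpsi, hom_comm, homV, (psi_F1 f1), (psi_F1 f1'), (psi_F2 f2); auto. gsimpl. }
  assert (HlcsT : forall c, is_subgroup (lcs (setT : subset F) c)).
  { intros c. apply commg_iter_subgroup. split; [|split]; intros; exact I. }
  split.
  { intros c Hc x. split.
    - intros [Hx Hl]. apply Hii in Hx. destruct Hx as [r [s [Hr [Hs ->]]]].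
      assert (Er : psi (gmul r s) = r).
      { rewrite Hpsi, (psi_S s Hs), (psi_F2 r (proj1 Hr)). gsimpl. }
      assert (Hrl : lcs F2 c r).
      { rewrite <- Er. unfold lcs. apply (hom_commg_iter psi setT setT); auto. }
      assert (HrlT : lcs setT c r).
      { refine (commg_iter_mono F2 F2 setT setT c _ _ r Hrl); intros ? ?; exact I. }
      exists r, s. split; [split; auto|split; [split; auto|reflexivity]].
      replace s with (gmul (ginv r) (gmul r s)) by gsimpl.
      apply sgM; auto. apply sgV; auto.
    - intros [r [s [[Hr Hrl] [[Hs Hsl] ->]]]]. split.
      + apply Hii. exists r, s. auto.
      + apply sgM; auto. refine (commg_iter_mono F2 F2 setT setT c _ _ r Hrl); intros ? ?; exact I. }
  intros c Hc.
  assert (HRn : is_normal R) by (apply (normal_seteq _ _ Hii); auto).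
  assert (HsT : is_subgroup (setT : subset F)) by (split; [|split]; intros; exact I).
  set (K := commg_iter R setT c).
  assert (HK : is_normal K).
  { split. apply commg_iter_subgroup, HRn.
    intros x g Hx. apply (commg_iter_conj _ _ (fun _ => True)); auto.
    intros; apply HRn; auto. }
  assert (HR2R : incl R2 R) by (intros r Hr; apply Hii; apply setM_l; auto; apply HS).
  assert (HSR : incl S R) by (intros r Hr; apply Hii; apply setM_r; auto).
  set (E := commg_iter R2 F2 c).
  set (P := prodR2F1F2 R2 F1 F2 c).
  set (Sc := commg_iter S setT c).
  assert (HE : is_subgroup E) by (apply commg_iter_subgroup; auto).
  assert (HP : is_normal P) by apply ncl_normal.
  assert (HSc : is_normal Sc).
  { split. apply commg_iter_subgroup, HS.
    intros x g Hx. apply (commg_iter_conj _ _ (fun _ => True)); auto.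
    intros; apply HS; auto. }
  assert (Kp : forall e g, E e -> F1 g -> P (comm e g)).
  { intros e g He Hg.
    assert (HW := commW_subgroup setT (fun f => f = g) P HsT (proj1 HP)
                    (fun m p Hm _ => proj2 HP m p Hm)).
    refine (proj2 (gen_min _ _ HW _ e (lemma_Y F2 R2 HF2 HR2F2 HR2c c e He)) g eq_refl).
    intros y [r [l [Hr [Hl [Hlen ->]]]]]. split; [exact I|]. intros f ->.
    destruct l as [|f l]. simpl in Hlen. subst c. inversion Hc.
    inversion Hl; subst.
    rewrite comm_list_cons, <- comm_list_app1. apply ncl_sub.
    exists (comm r f), (l ++ [g]). split; [apply HR2comm; auto|split].
    - rewrite length_app. simpl. rewrite PeanoNat.Nat.add_comm. reflexivity.
    - split. apply Forall_app; split. eapply Forall_impl; [|exact H2]. intros a Ha; right; auto.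
      constructor; [left; auto|constructor].
      split; auto. apply Exists_app. right. constructor; auto. }
  set (T := setM (setM E P) Sc).
  assert (HTs : is_subgroup T).
  { apply setM_subgroup; auto. apply setM_subgroup; auto. }
  assert (HT : is_normal T).
  { apply (normal_by_gens _ (setU F1 F2)); auto.
    intros g x [Hg|Hg] [ep [s [[e [p [He [Hp ->]]]] [Hs ->]]]].
    - exists (gmul e (gmul (comm e g) (conj p g))), (conj s g). split; [|split].
      + exists e, (gmul (comm e g) (conj p g)). split; auto. split; [|reflexivity].
        apply sgM. apply HP. apply Kp; auto. apply HP; auto.
      + apply HSc; auto.
      + gsimpl.
    - exists (gmul (conj e g) (conj p g)), (conj s g). split; [|split].
      + exists (conj e g), (conj p g). split; [|split; [apply HP; auto|reflexivity]].
        apply (commg_iter_conj _ _ F2); auto.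
        intros y h Hy Hh. unfold conj. repeat apply sgM; auto. apply sgV; auto.
      + apply HSc; auto.
      + rewrite !conjM. reflexivity. }
  intros x; split.
  - intros Hx.
    assert (HRY : incl R (ncl (setU R2 S))).
    { intros y Hy. apply Hii in Hy. revert y Hy. apply setM_in. apply ncl_normal.
      intros y Hy; apply ncl_sub; left; auto. intros y Hy; apply ncl_sub; right; auto. }
    apply (lemma_iter R (setU R2 S) (setU F1 F2) HallF HRY c) in Hx.
    revert x Hx. apply ncl_min; auto.
    intros x [y [l [[Hy|Hy] [Hlen [Hl ->]]]]].
    + destruct (classic (Exists F1 l)) as [Hex|Hnex].
      * apply setM_l. apply HSc. apply setM_r; auto. apply ncl_sub.
        exists y, l. auto.
      * apply setM_l. apply HSc. apply setM_l. apply HP.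
        unfold E. rewrite <- Hlen. apply comm_list_in; auto.
        apply Forall_forall. intros a Ha. eapply Forall_forall in Hl; [|exact Ha].
        destruct Hl as [Hl|Hl]; auto. exfalso. apply Hnex. apply Exists_exists. eauto.
    + apply setM_r. apply setM_subgroup; auto. unfold Sc. rewrite <- Hlen. apply comm_list_in; auto.
      apply Forall_forall; intros; exact I.
  - revert x. apply setM_in. apply HK. apply setM_in. apply HK.
    + apply commg_iter_mono; auto. intros ? ?; exact I.
    + apply ncl_min; auto. intros y [r2 [l [Hr [Hlen [_ [_ ->]]]]]]. unfold K. rewrite <- Hlen.
      apply comm_list_in. apply HR2R; auto. apply Forall_forall; intros; exact I.
    + apply commg_iter_mono; auto. intros ? ?; exact I.
Qed.
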